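(* Let $\alpha>0$ and let $f$ be defined by $x^\alpha+X^\alpha+f(x,X)^\alpha=1$, i.e. $f(x,X)=(1-x^\alpha-X^\alpha)^{1/\alpha}$ (for $\alpha=1$, $f(x,X)=1-x-X$), on a domain where the following maps are defined. Let $$S(x,X;y,Y)=(u,U;v,V)=\Big(\frac{x}{f(v,V)},\;X\frac{f(y,Y)}{f(v,V)};\;Xy,\;XY\Big),$$ let $\phi(x,X)=\big(f(x,X)/x,\;X/x\big)$, whose inverse is $\phi^{-1}(x,X)=\big((1+x^\alpha+X^\alpha)^{-1/\alpha},\;X(1+x^\alpha+X^\alpha)^{-1/\alpha}\big)$, and let $$S^{xY}(x,X;y,Y)=\Big(x,\;\frac{Xy}{(1+y^\alpha+Y^\alpha)^{1/\alpha}};\;\frac{\big((1+x^\alpha)(1+y^\alpha+Y^\alpha)+X^\alpha y^\alpha\big)^{1/\alpha}}{X},\;Y\Big).$$ Then $(\phi\times\phi)\circ S\circ(\phi^{-1}\times\phi^{-1})=S^{xY}$; i.e. $S$ is $(\mathrm{M\ddot ob})^2$ equivalent to the parametric map $S^{xY}$, which leaves the first and fourth components invariant.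
   Context: Two maps $S,\widehat S:\mathcal X^2\times\mathcal X^2\to\mathcal X^2\times\mathcal X^2$ are $(\mathrm{M\ddot ob})^2$ equivalent if there exists a birational map $\psi:\mathcal X^2\to\mathcal X^2$ with $S\circ(\psi\times\psi)=(\psi\times\psi)\circ\widehat S$ (here $\psi=\phi^{-1}$). *)

(* Defs.v *)
From Stdlib Require Import Reals.
Open Scope R_scope.

Definition pt := (R * R)%type.

Definition f (a x X : R) : R :=
  Rpower (1 - Rpower x a - Rpower X a) (1 / a).

Definition S (a : R) (p : pt * pt) : pt * pt :=
  let '((x, X), (y, Y)) := p in
  let v := X * y in
  let V := X * Y in
  ((x / f a v V, X * f a y Y / f a v V), (v, V)).

Definition phi (a : R) (p : pt) : pt :=
  let '(x, X) := p in (f a x X / x, X / x).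

Definition phi_inv (a : R) (p : pt) : pt :=
  let '(x, X) := p in
  let r := Rpower (1 + Rpower x a + Rpower X a) (- (1 / a)) in
  (r, X * r).

Definition SxY (a : R) (p : pt * pt) : pt * pt :=
  let '((x, X), (y, Y)) := p in
  ((x, X * y / Rpower (1 + Rpower y a + Rpower Y a) (1 / a)),
   (Rpower ((1 + Rpower x a) * (1 + Rpower y a + Rpower Y a)
            + Rpower X a * Rpower y a) (1 / a) / X, Y)).

Definition pmap (g : pt -> pt) (p : pt * pt) : pt * pt := (g (fst p), g (snd p)).

(* Main.v *)
Require Import Defs.
From Stdlib Require Import Reals Lra.
Open Scope R_scope.

Lemma rp_pos t z : 0 < Rpower t z.
Proof. unfold Rpower; apply exp_pos. Qed.

Lemma rp_inv t z : 0 < t -> Rpower (/ t) z = / Rpower t z.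
Proof. intros Ht. unfold Rpower. rewrite ln_Rinv by exact Ht.
  rewrite <- exp_Ropp. f_equal; ring. Qed.

Lemma rp_mul t s z : 0 < t -> 0 < s -> Rpower (t * s) z = Rpower t z * Rpower s z.
Proof. intros; symmetry; apply Rpower_mult_distr; auto. Qed.

Lemma rp_div t s z : 0 < t -> 0 < s -> Rpower (t / s) z = Rpower t z / Rpower s z.
Proof. intros. unfold Rdiv. rewrite rp_mul, rp_inv; auto. apply Rinv_0_lt_compat; auto. Qed.

Lemma rp_id1 t a : 0 < a -> 0 < t -> Rpower (Rpower t a) (1/a) = t.
Proof. intros. rewrite Rpower_mult. replace (a * (1/a)) with 1 by (field; lra).
  apply Rpower_1; auto. Qed.

Lemma rp_id2 t a : 0 < a -> 0 < t -> Rpower (Rpower t (1/a)) a = t.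
Proof. intros. rewrite Rpower_mult. replace (1/a * a) with 1 by (field; lra).
  apply Rpower_1; auto. Qed.

Theorem mainTheorem9 (a x X y Y : R) :
  0 < a -> 0 < x -> 0 < X -> 0 < y -> 0 < Y ->
  pmap (phi a) (S a (pmap (phi_inv a) ((x, X), (y, Y)))) = SxY a ((x, X), (y, Y)).
Proof.
  intros Ha Hx HX Hy HY.
  unfold pmap, phi_inv, S, phi, SxY, f; simpl.
  set (xa := Rpower x a). set (Xa := Rpower X a). set (ya := Rpower y a). set (Ya := Rpower Y a).
  assert (Hxa : 0 < xa) by apply rp_pos. assert (HXa : 0 < Xa) by apply rp_pos.
  assert (Hya : 0 < ya) by apply rp_pos. assert (HYa : 0 < Ya) by apply rp_pos.
  set (A := 1 + xa + Xa). set (B := 1 + ya + Ya).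
  set (C := (1 + xa) * B + Xa * ya).
  assert (HA : 0 < A) by (unfold A; lra). assert (HB : 0 < B) by (unfold B; lra).
  assert (HC : 0 < C) by (unfold C; nra).
  set (qA := Rpower A (1/a)). set (qB := Rpower B (1/a)). set (qC := Rpower C (1/a)).
  assert (HqA : 0 < qA) by apply rp_pos. assert (HqB : 0 < qB) by apply rp_pos.
  assert (HqC : 0 < qC) by apply rp_pos.
  rewrite !Rpower_Ropp. fold qA qB.
  assert (EA : Rpower qA a = A) by (apply rp_id2; auto).
  assert (EB : Rpower qB a = B) by (apply rp_id2; auto).
  assert (EC : Rpower qC a = C) by (apply rp_id2; auto).
  assert (Ev : Rpower (X * / qA * / qB) a = Xa / A / B).
  { rewrite !rp_mul, !rp_inv; try apply Rinv_0_lt_compat; auto.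
    rewrite EA, EB; unfold Xa; field; lra. apply Rmult_lt_0_compat; auto; apply Rinv_0_lt_compat; auto. }
  assert (EV : Rpower (X * / qA * (Y * / qB)) a = Xa * Ya / A / B).
  { rewrite !rp_mul, !rp_inv; try apply Rinv_0_lt_compat; auto;
    try (apply Rmult_lt_0_compat; auto; apply Rinv_0_lt_compat; auto).
    rewrite EA, EB; unfold Xa, Ya; field; lra. }
  unfold Defs.f. rewrite Ev, EV.
  assert (Ef1 : Rpower (1 - Xa / A / B - Xa * Ya / A / B) (1/a) = qC / qA / qB).
  { replace (1 - Xa / A / B - Xa * Ya / A / B) with (C / A / B)
      by (unfold C, A, B; field; lra).
    rewrite !rp_div; auto. apply Rdiv_lt_0_compat; auto. }
  rewrite Ef1.
  assert (Ey : Rpower (/ qB) a = / B) by (rewrite rp_inv, EB; auto).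
  assert (EYy : Rpower (Y * / qB) a = Ya / B).
  { rewrite rp_mul, Ey; auto. apply Rinv_0_lt_compat; auto. }
  rewrite Ey, EYy.
  assert (Ef2 : Rpower (1 - / B - Ya / B) (1/a) = y / qB).
  { replace (1 - / B - Ya / B) with (ya / B) by (unfold B; field; lra).
    rewrite rp_div; auto. unfold ya; rewrite rp_id1; auto. }
  rewrite Ef2.
  replace (/ qA / (qC / qA / qB)) with (qB / qC) by (field; lra).
  replace (X * / qA * (y / qB) / (qC / qA / qB)) with (X * y / qC) by (field; lra).
  assert (Eu : Rpower (qB / qC) a = B / C) by (rewrite rp_div, EB, EC; auto).
  assert (EU : Rpower (X * y / qC) a = Xa * ya / C).
  { rewrite rp_div, rp_mul, EC; auto. apply Rmult_lt_0_compat; auto. }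
  rewrite Eu, EU.
  assert (Ef3 : Rpower (1 - B / C - Xa * ya / C) (1/a) = x * qB / qC).
  { replace (1 - B / C - Xa * ya / C) with (xa * B / C) by (replace (xa * B) with (C - B - Xa * ya) by (unfold C; ring); field; lra).
    rewrite rp_div, rp_mul; auto; [ | apply Rmult_lt_0_compat; auto]. unfold xa; rewrite rp_id1; auto. }
  rewrite Ef3.
  f_equal; f_equal; try (field; lra).
Qed.
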